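(* Let $A=\sigma(R)\langle x_1,\dots,x_n\rangle$ be a quasi-commutative bijective $\sigma$-PBW extension of $R$ (under the standing assumptions below). Then every submodule of $A^m$ has a Gröbner basis.
   Context: Let $R\subseteq A$ be rings. $A$ is a $\sigma$-PBW extension of $R$, written $A=\sigma(R)\langle x_1,\dots,x_n\rangle$, if there are $x_1,\dots,x_n\in A\setminus R$ such that: (i) $A$ is a free left $R$-module with basis $\mathrm{Mon}(A)=\{x^\alpha=x_1^{\alpha_1}\cdots x_n^{\alpha_n}:\alpha\in\mathbb N^n\}$, with $x^0=1$; (ii) for every $i$ and every $r\in R\setminus\{0\}$ there is $c_{i,r}\in R\setminus\{0\}$ with $x_ir-c_{i,r}x_i\in R$; (iii) for all $i,j$ there is $c_{i,j}\in R\setminus\{0\}$ with $x_jx_i-c_{i,j}x_ix_j\in R+Rx_1+\dots+Rx_n$. There are injective ring endomorphisms $\sigma_i$ of $R$ and $\sigma_i$-derivations $\delta_i$ with $x_ir=\sigma_i(r)x_i+\delta_i(r)$. Write $\sigma^\alpha=\sigma_1^{\alpha_1}\circ\cdots\circ\sigma_n^{\alpha_n}$ and $|\alpha|=\sum\alpha_i$. For $\alpha,\beta$ there are unique $c_{\alpha,\beta}\in R$ (left invertible) and $p_{\alpha,\beta}\in A$ with $x^\alpha x^\beta=c_{\alpha,\beta}x^{\alpha+\beta}+p_{\alpha,\beta}$, where $p_{\alpha,\beta}=0$ or $\deg p_{\alpha,\beta}<|\alpha+\beta|$. $A$ is quasi-commutative if $x_ir=c_{i,r}x_i$ and $x_jx_i=c_{i,j}x_ix_j$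 exactly. $A$ is bijective if each $\sigma_i$ is bijective and $c_{i,j}$ is invertible for $i<j$. Standing assumptions: $R$ is left Gröbner soluble (left Noetherian; left ideal membership decidable with computable coefficients; finite generating sets of left syzygy modules computable). $\mathrm{Mon}(A)$ carries a monomial order, i.e. a total order $\succeq$ with: (a) $x^\beta\succeq x^\alpha\Rightarrow lm(x^\gamma x^\beta x^\lambda)\succeq lm(x^\gamma x^\alpha x^\lambda)$; (b) $x^\alpha\succeq1$; (c) $|\beta|\ge|\alpha|\Rightarrow x^\beta\succeq x^\alpha$. $A^m$ is the free left $A$-module of column vectors with canonical basis $\mathbf e_i$. Monomials of $A^m$ are $x^\alpha\mathbf e_i$, with $\mathrm{ind}=i$, $\exp=\alpha$, $\deg=|\alpha|$. The monomial $x^\alpha\mathbf e_i$ divides $x^\beta\mathbf e_j$ iff $i=j$ and $\beta_k\ge\alpha_k$ for all $k$. $\mathrm{Mon}(A^m)$ carries a monomial order, i.e. a total order with: (i) $lm(x^\beta x^\alpha)\mathbf e_i\succeq x^\alpha\mathbf e_i$; (ii) $x^\beta\mathbf e_j\succeq x^\alpha\mathbf e_i\Rightarrow lm(x^\gamma x^\beta)\mathbf e_j\succeq lm(x^\gamma x^\alpha)\mathbf e_i$; (iii) $\deg\mathbf X\ge\deg\mathbf Y\Rightarrow\mathbf X\succeq\mathbf Y$. For nonzero $\mathbf f$, $lm(\mathbf f)$ and $lc(\mathbf f)$ denote its leading monomial and leading coefficient. Reduction. Let $F$ be a finite set of nonzero vectors and $\mathbf f\in A^m$. A one-step reduction of $\mathbf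 f$ by $F$ exists if there are $\mathbf f_1,\dots,\mathbf f_t\in F$ and $r_1,\dots,r_t\in R$ with: (1) $lm(\mathbf f_i)\mid lm(\mathbf f)$, with $\alpha_i+\exp(lm\,\mathbf f_i)=\exp(lm\,\mathbf f)$; (2) $lc(\mathbf f)=\sum r_i\sigma^{\alpha_i}(lc\,\mathbf f_i)c_{\alpha_i,\exp(lm\,\mathbf f_i)}$. $\mathbf f$ is reducible w.r.t. $F$ if such a reduction exists. Gröbner basis. For a submodule $M\neq0$ of $A^m$, a nonempty finite set $G$ of nonzero vectors of $M$ is a Gröbner basis for $M$ if every nonzero $\mathbf f\in M$ is reducible w.r.t. $G$; $\{0\}$ is a Gröbner basis of $M=0$. *)

(* Defs.v *)
From HB Require Import structures.
From mathcomp Require Import all_boot all_order all_algebra.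
Set Implicit Arguments. Unset Strict Implicit. Unset Printing Implicit Defensive.
Import GRing.Theory.
Local Open Scope ring_scope.

Definition mexp (n : nat) := {ffun 'I_n -> nat}.
Definition mexp0 (n : nat) : mexp n := [ffun => 0%N].
Definition mexp_add (n : nat) (a b : mexp n) : mexp n := [ffun i => (a i + b i)%N].
Definition mexp_unit (n : nat) (i : 'I_n) : mexp n := [ffun k => nat_of_bool (k == i)].
Definition mdeg (n : nat) (a : mexp n) : nat := (\sum_(i < n) a i)%N.

(* Total order (reflexive, antisymmetric, transitive, total); [le a b] reads "a ⪰ b". *)
Definition is_total_order (T : eqType) (le : rel T) : Prop :=
  reflexive le /\ antisymmetric le /\ transitive le /\ total le.

Section SigmaPBW.
Variables (A : nzRingType) (R : {pred A}) (n : nat) (x : 'I_n -> A).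
(* coef a alpha = coordinate of a on the basis element x^alpha *)
Variable (coef : A -> mexp n -> A).

Definition mon (a : mexp n) : A := \prod_(i < n) x i ^+ a i.

Definition is_subring : Prop :=
  1 \in R /\ (forall a b, a \in R -> b \in R -> a - b \in R) /\
  (forall a b, a \in R -> b \in R -> a * b \in R).

Definition free_basis_coord : Prop :=
  (forall a al, coef a al \in R) /\
  (forall a, exists s : seq (mexp n), uniq s /\
      (forall al, al \notin s -> coef a al = 0) /\
      a = \sum_(al <- s) coef a al * mon al) /\
  (forall (s : seq (mexp n)) (c : mexp n -> A), uniq s ->
      (forall al, al \in s -> c al \in R) ->
      \sum_(al <- s) c al * mon al = 0 -> forall al, al \in s -> c al = 0).

Definition in_lin1 (a : A) : Prop :=
  exists (d0 : A) (d : 'I_n -> A), d0 \in R /\ (forall k, d k \in R) /\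
    a = d0 + \sum_(k < n) d k * x k.

Definition sigma_PBW : Prop :=
  is_subring /\ free_basis_coord /\ (forall i, x i \notin R) /\
  (forall i r, r \in R -> r != 0 ->
     exists c, c \in R /\ c != 0 /\ x i * r - c * x i \in R) /\
  (forall i j, exists c, c \in R /\ c != 0 /\ in_lin1 (x j * x i - c * (x i * x j))).

Definition quasi_commutative : Prop :=
  (forall i r, r \in R -> r != 0 -> exists c, c \in R /\ c != 0 /\ x i * r = c * x i) /\
  (forall i j, exists c, c \in R /\ c != 0 /\ x j * x i = c * (x i * x j)).

(* sigma_i(r): x_i r = sigma_i(r) x_i + delta_i(r) *)
Definition sigma (i : 'I_n) (r : A) : A := coef (x i * r) (mexp_unit i).

Definition sigma_pow (al : mexp n) : A -> A :=
  foldr (fun i g => iter (al i) (sigma i) \o g) id (enum 'I_n).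

(* c_{alpha,beta}: x^alpha x^beta = c_{alpha,beta} x^{alpha+beta} + p_{alpha,beta} *)
Definition c_ab (al be : mexp n) : A := coef (mon al * mon be) (mexp_add al be).

Definition unit_in_R (a : A) : Prop :=
  exists u, u \in R /\ u * a = 1 /\ a * u = 1.

Definition bijective_ext : Prop :=
  (forall i, (forall r s, r \in R -> s \in R -> sigma i r = sigma i s -> r = s) /\
             (forall s, s \in R -> exists r, r \in R /\ sigma i r = s)) /\
  (forall i j : 'I_n, (i < j)%N ->
     exists c, c \in R /\ unit_in_R c /\ in_lin1 (x j * x i - c * (x i * x j))).

Definition left_ideal (I : A -> Prop) : Prop :=
  (forall a, I a -> a \in R) /\ I 0 /\ (forall a b, I a -> I b -> I (a + b)) /\
  (forall r a, r \in R -> I a -> I (r * a)).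

Definition left_noetherian : Prop :=
  forall I, left_ideal I -> exists s : seq A, (forall a, a \in s -> I a) /\
    forall a, I a -> exists c : nat -> A, (forall k, c k \in R) /\
      a = \sum_(k < size s) c k * s`_k.

(* Monomial order on Mon(A): [mo b a] means x^b ⪰ x^a. *)
Variable (mo : rel (mexp n)).

Definition is_lm (f : A) (mu : mexp n) : Prop :=
  coef f mu != 0 /\ forall nu, coef f nu != 0 -> mo mu nu.

Definition monomial_order : Prop :=
  is_total_order mo /\
  (forall al be ga la, mo be al -> forall mu nu,
      is_lm (mon ga * mon be * mon la) mu ->
      is_lm (mon ga * mon al * mon la) nu -> mo mu nu) /\
  (forall al, mo al (mexp0 n)) /\
  (forall al be, (mdeg al < mdeg be)%N -> mo be al).

Variable (m : nat).
(* Monomial order on Mon(A^m): a monomial x^alpha e_i is the pair (alpha, i). *)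
Variable (mo2 : rel (mexp n * 'I_m)).

Definition module_monomial_order : Prop :=
  is_total_order mo2 /\
  (forall al be (i : 'I_m) mu, is_lm (mon be * mon al) mu -> mo2 (mu, i) (al, i)) /\
  (forall al be ga (i j : 'I_m), mo2 (be, j) (al, i) -> forall mu nu,
      is_lm (mon ga * mon be) mu -> is_lm (mon ga * mon al) nu -> mo2 (mu, j) (nu, i)) /\
  (forall X Y : mexp n * 'I_m, (mdeg Y.1 < mdeg X.1)%N -> mo2 X Y).

(* lm(f) = x^(X.1) e_(X.2); then lc(f) = coef (f X.2 0) X.1 *)
Definition is_lmV (f : 'cV[A]_m) (X : mexp n * 'I_m) : Prop :=
  coef (f X.2 0) X.1 != 0 /\
  forall Y : mexp n * 'I_m, coef (f Y.2 0) Y.1 != 0 -> mo2 X Y.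

Definition reducible (F : seq 'cV[A]_m) (f : 'cV[A]_m) : Prop :=
  exists (mu : mexp n) (i : 'I_m), is_lmV f (mu, i) /\
  exists (t : nat) (g : 'I_t -> 'cV[A]_m) (r : 'I_t -> A) (al mu' : 'I_t -> mexp n),
    (forall k, g k \in F) /\ (forall k, r k \in R) /\
    (forall k, is_lmV (g k) (mu' k, i)) /\
    (forall k, mexp_add (al k) (mu' k) = mu) /\
    coef (f i 0) mu =
      \sum_(k < t) r k * sigma_pow (al k) (coef (g k i 0) (mu' k)) * c_ab (al k) (mu' k).

Definition is_submodule (M : 'cV[A]_m -> Prop) : Prop :=
  M 0 /\ (forall u v, M u -> M v -> M (u + v)) /\ (forall a v, M v -> M (a *: v)).

Definition groebner_basis (M : 'cV[A]_m -> Prop) (G : seq 'cV[A]_m) : Prop :=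
  ((forall v, M v -> v = 0) /\ G = [:: 0]) \/
  ((exists v, M v /\ v != 0) /\ G != [::] /\
   (forall g, g \in G -> M g /\ g != 0) /\
   (forall f, M f -> f != 0 -> reducible G f)).

End SigmaPBW.

(* Main.v *)
Require Import Defs.
From HB Require Import structures.
From mathcomp Require Import all_boot all_order all_algebra.
From mathcomp Require Import zify.
From Stdlib Require Import Classical ClassicalEpsilon.
Set Implicit Arguments. Unset Strict Implicit. Unset Printing Implicit Defensive.
Import GRing.Theory.
Local Open Scope ring_scope.

Definition incr (phi : nat -> nat) := forall j, (phi j < phi j.+1)%N.
Definition mono (g : nat -> nat) := forall j j', (j <= j')%N -> (g j <= g j')%N.

Lemma incr_mono phi : incr phi -> mono phi.
Proof.
move=> h j j' /subnKC <-; elim: (j' - j)%N => [|k IH]; first by rewrite addn0.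
by rewrite addnS; apply: leq_trans IH (ltnW (h _)).
Qed.

Lemma incr_comp phi psi : incr phi -> incr psi -> incr (fun j => phi (psi j)).
Proof.
move=> hp hq j; have := incr_mono hp (hq j).
by move=> h; apply: leq_trans h; apply: hp.
Qed.

Lemma mono_comp g psi : mono g -> incr psi -> mono (fun j => g (psi j)).
Proof. by move=> hg hq j j' le; apply: hg; apply: incr_mono. Qed.

Lemma step_mono g : (forall j, (g j <= g j.+1)%N) -> mono g.
Proof.
move=> h j j' /subnKC <-; elim: (j' - j)%N => [|k IH]; first by rewrite addn0.
by rewrite addnS; apply: leq_trans IH (h _).
Qed.

Lemma min_nat (P : nat -> Prop) : (exists v, P v) -> exists v, P v /\ forall w, P w -> (v <= w)%N.
Proof.
move=> [v hv]; elim: v {-2}v (leqnn v) hv => [|b IH] v hb hv.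
  by exists v; split => // w _; move: hb; rewrite leqn0 => /eqP ->.
case: (classic (exists w, P w /\ (w < v)%N)) => [[w [hw lt]]|nh].
  by apply: (IH w) => //; rewrite -ltnS; apply: leq_trans lt hb.
exists v; split => // w hw; rewrite leqNgt; apply/negP => lt; apply: nh; by exists w.
Qed.

Lemma nondec_sub (u : nat -> nat) : exists phi, incr phi /\ mono (fun j => u (phi j)).
Proof.
have hn : forall p, exists k, (p < k)%N /\ forall k', (p < k')%N -> (u k <= u k')%N.
  move=> p; have [v [[k [pk ek]] hv]] := min_nat (P := fun v => exists k, (p < k)%N /\ u k = v)
     (ex_intro _ (u p.+1) (ex_intro _ p.+1 (conj (ltnSn p) erefl))).
  by exists k; split => // k' pk'; rewrite ek; apply: hv; exists k'.
pose next p := proj1_sig (constructive_indefinite_description _ (hn p)).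
have hnext p : (p < next p)%N /\ forall k', (p < k')%N -> (u (next p) <= u k')%N.
  by rewrite /next; case: constructive_indefinite_description.
exists (fun j => iter j.+1 next 0); split.
  by move=> j; rewrite [X in (_ < X)%N]iterS; apply: (hnext _).1.
apply: step_mono => j; rewrite [X in (_ <= u X)%N]iterS.
set q := iter j next 0; rewrite iterS -/q.
apply: (hnext q).2; exact: ltn_trans (hnext q).1 (hnext _).1.
Qed.

Lemma subseq_mono (T : Type) (gs : seq (T -> nat)) (s : nat -> T) :
  exists phi, incr phi /\ forall g, List.In g gs -> mono (fun j => g (s (phi j))).
Proof.
elim: gs => [|g gs [phi [hp hg]]].
  by exists id; split => // j.
have [psi [hq hm]] := nondec_sub (fun j => g (s (phi j))).
exists (fun j => phi (psi j)); split; first exact: incr_comp.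
move=> g' /= [<-|hin]; first exact: hm.
by apply: (mono_comp (g := fun j => g' (s (phi j)))) => //; apply: hg.
Qed.

Lemma infsub (P : nat -> Prop) : (forall p, exists k, (p < k)%N /\ P k) ->
  exists phi, incr phi /\ forall j, P (phi j).
Proof.
move=> hn; pose next p := proj1_sig (constructive_indefinite_description _ (hn p)).
have hnext p : (p < next p)%N /\ P (next p).
  by rewrite /next; case: constructive_indefinite_description.
exists (fun j => iter j.+1 next 0); split.
  by move=> j; rewrite [X in (_ < X)%N]iterS; apply: (hnext _).1.
by move=> j; rewrite iterS; apply: (hnext _).2.
Qed.

Lemma inInP (T : eqType) (t : T) (s : seq T) : t \in s -> List.In t s.
Proof.
elim: s => [//|a s IH]; rewrite inE => /orP [/eqP ->|h]; [by left | by right; apply: IH].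
Qed.

Lemma dickson (n m : nat) (s : nat -> mexp n * 'I_m) : exists phi, incr phi /\
  forall j j', (j <= j')%N -> (s (phi j)).2 = (s (phi j')).2 /\
     forall t, ((s (phi j)).1 t <= (s (phi j')).1 t)%N.
Proof.
pose gs := [seq (fun X : mexp n * 'I_m => X.1 t) | t <- enum 'I_n] ++
   [:: (fun X : mexp n * 'I_m => val X.2); (fun X : mexp n * 'I_m => m - val X.2)%N].
have [phi [hp hg]] := subseq_mono gs s.
exists phi; split => // j j' le; split.
  apply: val_inj; apply/eqP; rewrite eqn_leq.
  have h1 := hg (fun X : mexp n * 'I_m => val X.2) ltac:(by apply/List.in_or_app; right; left) _ _ le.
  have h2 := hg (fun X : mexp n * 'I_m => m - val X.2)%N ltac:(by apply/List.in_or_app; right; right; left) _ _ le.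
  move: h1 h2 => /= h1 h2.
  have l1 := ltn_ord (s (phi j)).2; have l2 := ltn_ord (s (phi j')).2.
  apply/andP; split; lia.
move=> t; apply: (hg (fun X : mexp n * 'I_m => X.1 t)) => //.
apply/List.in_or_app; left; apply/List.in_map_iff; exists t; split => //; apply: inInP; rewrite mem_enum. by [].
Qed.

Lemma acc (A : nzRingType) (R : {pred A}) (Q : nat -> A -> Prop) : left_noetherian R ->
  (forall j, left_ideal R (Q j)) -> (forall j a, Q j a -> Q j.+1 a) ->
  exists J, forall a, Q J.+1 a -> Q J a.
Proof.
move=> HN hI hS.
have hM : forall j j' a, (j <= j')%N -> Q j a -> Q j' a.
  move=> j j' a /subnKC <-; elim: (j' - j)%N => [|k IH]; first by rewrite addn0.
  by move=> h; rewrite addnS; apply: hS; apply: IH.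
pose U a := exists j, Q j a.
have hU : left_ideal R U.
  split; first by move=> a [j h]; case: (hI j) => h1 _; apply: h1.
  split; first by exists 0%N; case: (hI 0%N) => _ [].
  split.
    move=> a b [j ha] [j' hb]; exists (maxn j j').
    case: (hI (maxn j j')) => _ [_ [hd _]]; apply: hd.
    - by apply: hM ha; apply: leq_maxl.
    - by apply: hM hb; apply: leq_maxr.
  by move=> r a hr [j ha]; exists j; case: (hI j) => _ [_ [_ hm]]; apply: hm.
have [s [hs hgen]] := HN U hU.
have [J hJ] : exists J, forall a, a \in s -> Q J a.
  elim: s hs {hgen} => [|b s IH] hs; first by exists 0%N.
  have [J1 h1] := IH (fun a ha => hs a ltac:(by rewrite inE ha orbT)).
  have [J2 h2] := hs b (mem_head _ _).
  exists (maxn J1 J2) => a; rewrite inE => /orP [/eqP ->|ha].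
  - by apply: hM h2; apply: leq_maxr.
  - by apply: hM (h1 a ha); apply: leq_maxl.
exists J => a ha.
have [c [hc ->]] := hgen a (ex_intro _ J.+1 ha).
case: (hI J) => _ [h0 [hd hm]].
apply: (big_ind (Q J)) => // k _; apply: hm => //; apply: hJ; apply: mem_nth.
exact: ltn_ord.
Qed.

Section Alg.
Variables (A : nzRingType) (R : {pred A}) (n : nat) (x : 'I_n -> A)
  (coef : A -> mexp n -> A).
Hypothesis HP : sigma_PBW R x coef.

Local Notation mon := (mon x).

Lemma R1 : 1 \in R. Proof. by case: HP => [[]]. Qed.
Lemma RB a b : a \in R -> b \in R -> a - b \in R. Proof. by case: HP => [[_ []]] ; auto. Qed.
Lemma RM a b : a \in R -> b \in R -> a * b \in R. Proof. by case: HP => [[_ []]] ; auto. Qed.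
Lemma R0 : 0 \in R. Proof. by rewrite -(subrr 1) RB ?R1. Qed.
Lemma RN a : a \in R -> - a \in R. Proof. by move=> h; rewrite -sub0r RB ?R0. Qed.
Lemma RD a b : a \in R -> b \in R -> a + b \in R.
Proof. by move=> ha hb; rewrite -(opprK b) RB ?RN. Qed.
Lemma RS (I : Type) (s : seq I) (F : I -> A) : (forall i, F i \in R) -> \sum_(i <- s) F i \in R.
Proof. move=> h; elim: s => [|i s IH]; rewrite ?big_nil ?big_cons ?R0 //; exact: RD. Qed.

Lemma coefR a al : coef a al \in R. Proof. by case: HP => [_ [[]]]. Qed.
Lemma coef_ex a : exists s : seq (mexp n), uniq s /\
      (forall al, al \notin s -> coef a al = 0) /\
      a = \sum_(al <- s) coef a al * mon al.
Proof. by case: HP => [_ [[_ [h _]] _]]. Qed.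
Lemma coef_un (s : seq (mexp n)) (c : mexp n -> A) : uniq s ->
      (forall al, al \in s -> c al \in R) ->
      \sum_(al <- s) c al * mon al = 0 -> forall al, al \in s -> c al = 0.
Proof. by case: HP => [_ [[_ [_ h]] _]]; apply: h. Qed.

Lemma sum_ext (s s' : seq (mexp n)) (F : mexp n -> A) : uniq s -> uniq s' ->
  {subset s <= s'} ->
  \sum_(al <- s) F al = \sum_(al <- s') (if al \in s then F al else 0).
Proof.
move=> us us' ss; rewrite -big_mkcond /= -[RHS]big_filter; apply: perm_big.
apply: uniq_perm => //; first exact: filter_uniq.
by move=> al; rewrite mem_filter; case h: (al \in s) => //=; rewrite ss.
Qed.

Lemma sum_ext2 (s s' : seq (mexp n)) (F : mexp n -> A) : uniq s -> uniq s' ->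
  {subset s <= s'} -> (forall al, al \notin s -> F al = 0) ->
  \sum_(al <- s) F al = \sum_(al <- s') F al.
Proof.
move=> us us' ss h0; rewrite (sum_ext F us us' ss); apply: eq_bigr => al _.
by case: ifP => // /negbT /h0.
Qed.

Lemma expand_any a (s : seq (mexp n)) : uniq s -> (forall al, al \notin s -> coef a al = 0) ->
  a = \sum_(al <- s) coef a al * mon al.
Proof.
move=> us h0; have [s0 [us0 [h00 ea]]] := coef_ex a; rewrite {1}ea.
set s1 := undup (s0 ++ s).
have us1 : uniq s1 by apply: undup_uniq.
rewrite (@sum_ext2 s0 s1) //; last 2 first.
- by move=> al h; rewrite mem_undup mem_cat h.
- by move=> al /h00 ->; rewrite mul0r.
rewrite [RHS](@sum_ext2 s s1) //; last 2 first.
- by move=> al h; rewrite mem_undup mem_cat h orbT.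
- by move=> al /h0 ->; rewrite mul0r.
Qed.

Lemma coef_sum (s : seq (mexp n)) (c : mexp n -> A) : uniq s ->
  (forall al, al \in s -> c al \in R) -> forall mu,
  coef (\sum_(al <- s) c al * mon al) mu = if mu \in s then c mu else 0.
Proof.
move=> us cR mu; set a := \sum_(al <- s) _.
have [s0 [us0 [h00 _]]] := coef_ex a.
set s1 := undup (s0 ++ s).
have us1 : uniq s1 by apply: undup_uniq.
have e1 := @expand_any a s1 us1.
have e2 : a = \sum_(al <- s1) (if al \in s then c al else 0) * mon al.
  rewrite /a (@sum_ext s s1) //; last by move=> al h; rewrite mem_undup mem_cat h orbT.
  by apply: eq_bigr => al _; case: ifP => //; rewrite mul0r.
have h0 : forall al, al \notin s1 -> coef a al = 0.
  by move=> al; rewrite mem_undup mem_cat negb_or => /andP [/h00].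
have e3 : \sum_(al <- s1) (coef a al - (if al \in s then c al else 0)) * mon al = 0.
  under eq_bigr do rewrite mulrBl.
  by rewrite sumrB -e1 // -e2 subrr.
have hz := coef_un us1 _ e3.
case hm : (mu \in s1).
- apply/eqP; rewrite -subr_eq0; apply/eqP; apply: hz => // al _.
  by apply: RB; [apply: coefR | case: ifP => h; [apply: cR | apply: R0]].
- rewrite h0 ?hm //.
  by move: hm; rewrite mem_undup mem_cat => /negbT; rewrite negb_or => /andP [_ /negbTE ->].
Qed.

Lemma coef_mon r mu nu : r \in R -> coef (r * mon mu) nu = if nu == mu then r else 0.
Proof.
move=> hr; have := @coef_sum [:: mu] (fun _ => r) erefl (fun _ _ => hr) nu.
by rewrite big_seq1 mem_seq1.
Qed.

Lemma coef0 nu : coef 0 nu = 0.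
Proof. by have := @coef_sum [::] (fun _ => 0) erefl (fun _ _ => R0) nu; rewrite big_nil. Qed.

Lemma coefD a b nu : coef (a + b) nu = coef a nu + coef b nu.
Proof.
have [sa [usa [ha _]]] := coef_ex a; have [sb [usb [hb _]]] := coef_ex b.
set s1 := undup (sa ++ sb); have us1 : uniq s1 by apply: undup_uniq.
have n1 : forall al, al \notin s1 -> al \notin sa /\ al \notin sb.
  by move=> al; rewrite mem_undup mem_cat negb_or => /andP.
have ea : a = \sum_(al <- s1) coef a al * mon al.
  by apply: expand_any => // al /n1 [/ha].
have eb : b = \sum_(al <- s1) coef b al * mon al.
  by apply: expand_any => // al /n1 [_ /hb].
rewrite {1}ea {1}eb.
rewrite -big_split /=.
under eq_bigr do rewrite -mulrDl.
rewrite coef_sum //; last by move=> al _; apply: RD; apply: coefR.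
case: ifP => // /negbT /n1 [/ha -> /hb ->]; by rewrite addr0.
Qed.

Lemma coefRM r a nu : r \in R -> coef (r * a) nu = r * coef a nu.
Proof.
move=> hr; have [sa [usa [ha ea]]] := coef_ex a.
rewrite {1}ea mulr_sumr.
under eq_bigr do rewrite mulrA.
rewrite coef_sum //; last by move=> al _; apply: RM => //; apply: coefR.
by case: ifP => // /negbT /ha ->; rewrite mulr0.
Qed.

Lemma coefN a nu : coef (- a) nu = - coef a nu.
Proof. by apply/eqP; rewrite -addr_eq0 -coefD addNr coef0. Qed.

Lemma coefS (I : Type) (l : seq I) (F : I -> A) nu :
  coef (\sum_(i <- l) F i) nu = \sum_(i <- l) coef (F i) nu.
Proof.
elim: l => [|i l IH]; first by rewrite !big_nil coef0.
by rewrite !big_cons coefD IH.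
Qed.

Lemma mon0 : mon (mexp0 n) = 1.
Proof. by rewrite /Defs.mon big1 // => i _; rewrite ffunE expr0. Qed.

Lemma mon_unit i : mon (mexp_unit i) = x i.
Proof.
rewrite /Defs.mon (eq_bigr (fun k => if k == i then x k else 1)); last first.
  by move=> k _; rewrite ffunE; case: (k == i); rewrite ?expr1 ?expr0.
by rewrite -big_mkcond big_pred1_eq.
Qed.

Lemma coef_x r i nu : r \in R -> coef (r * x i) nu = if nu == mexp_unit i then r else 0.
Proof. by move=> hr; rewrite -mon_unit coef_mon. Qed.


Hypothesis HQ : quasi_commutative R x.
Hypothesis HB : bijective_ext R x coef.
Local Notation sig := (sigma x coef).

Lemma sigR i r : sig i r \in R. Proof. exact: coefR. Qed.
Lemma sig0 i : sig i 0 = 0. Proof. by rewrite /sigma mulr0 coef0. Qed.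
Lemma xr i r : r \in R -> x i * r = sig i r * x i.
Proof.
move=> hr; case: (eqVneq r 0) => [->|nz]; first by rewrite mulr0 sig0 mul0r.
have [c [cR [_ e]]] := HQ.1 i r hr nz.
by rewrite /sigma e coef_x // eqxx.
Qed.
Lemma sigD i a b : sig i (a + b) = sig i a + sig i b.
Proof. by rewrite /sigma mulrDr coefD. Qed.
Lemma sigM i r s : r \in R -> s \in R -> sig i (r * s) = sig i r * sig i s.
Proof.
move=> hr hs; rewrite {1}/sigma mulrA xr // -mulrA xr // mulrA coef_x ?eqxx //.
by apply: RM; apply: sigR.
Qed.
Lemma sig1 i : sig i 1 = 1.
Proof. by rewrite /sigma mulr1 -[x i]mul1r coef_x ?R1 ?eqxx. Qed.

Definition uR a := a \in R /\ exists u, u \in R /\ u * a = 1 /\ a * u = 1.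
Lemma uR1 : uR 1. Proof. by split; [apply: R1 | exists 1; rewrite mulr1 R1]. Qed.
Lemma uRM a b : uR a -> uR b -> uR (a * b).
Proof.
move=> [ha [u [hu [e1 e2]]]] [hb [v [hv [f1 f2]]]]; split; first exact: RM.
exists (v * u); split; first exact: RM.
by split; [rewrite mulrA -(mulrA v) e1 mulr1 | rewrite mulrA -(mulrA a) f2 mulr1].
Qed.
Lemma sig_unit i a : uR a -> uR (sig i a).
Proof.
move=> [ha [u [hu [e1 e2]]]]; split; first exact: sigR.
exists (sig i u); split; first exact: sigR.
by rewrite -!sigM // e1 e2 sig1.
Qed.

Definition it k i := iter k (sig i).
Lemma itR k i r : r \in R -> it k i r \in R.
Proof. by case: k => //= k _; apply: sigR. Qed.
Lemma itD k i a b : it k i (a + b) = it k i a + it k i b.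
Proof. by elim: k => //= k IH; rewrite IH sigD. Qed.
Lemma itM k i r s : r \in R -> s \in R -> it k i (r * s) = it k i r * it k i s.
Proof. by move=> hr hs; elim: k => //= k IH; rewrite IH sigM //; apply: itR. Qed.
Lemma it0 k i : it k i 0 = 0. Proof. by elim: k => //= k ->; rewrite sig0. Qed.
Lemma it_unit k i a : uR a -> uR (it k i a).
Proof. by move=> h; elim: k => //= k IH; apply: sig_unit. Qed.
Lemma xpow_r k i r : r \in R -> x i ^+ k * r = it k i r * x i ^+ k.
Proof.
elim: k r => [|k IH] r hr; first by rewrite !expr0 mul1r mulr1.
by rewrite exprSr -mulrA xr // mulrA IH ?sigR // /it iterSr -mulrA -exprSr.
Qed.
Lemma it_surj k i y : y \in R -> exists b, b \in R /\ it k i b = y.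
Proof.
elim: k y => [|k IH] y hy; first by exists y.
have [b1 [hb1 <-]] := IH y hy.
have [b [hb e]] := (HB.1 i).2 b1 hb1.
by exists b; split => //; rewrite /it iterSr e.
Qed.

Definition sp (l : seq 'I_n) (al : mexp n) : A -> A :=
  foldr (fun i g => iter (al i) (sig i) \o g) id l.
Lemma spE al : sigma_pow x coef al = sp (enum 'I_n) al. Proof. by []. Qed.
Lemma spR l al r : r \in R -> sp l al r \in R.
Proof. by move=> hr; elim: l => //= i l IH; apply: itR. Qed.
Lemma spD l al a b : sp l al (a + b) = sp l al a + sp l al b.
Proof. by elim: l => //= i l IH; rewrite IH; apply: itD. Qed.
Lemma sp0 l al : sp l al 0 = 0.
Proof. by elim: l => //= i l IH; rewrite IH; apply: it0. Qed.
Lemma spM l al r s : r \in R -> s \in R -> sp l al (r * s) = sp l al r * sp l al s.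
Proof. by move=> hr hs; elim: l => //= i l IH; rewrite IH; apply: itM; apply: spR. Qed.
Lemma sp_prod l (al : mexp n) r : r \in R ->
  (\prod_(i <- l) x i ^+ al i) * r = sp l al r * \prod_(i <- l) x i ^+ al i.
Proof.
move=> hr; elim: l => [|i l IH]; first by rewrite !big_nil mul1r mulr1.
rewrite !big_cons -mulrA IH mulrA xpow_r ?spR // -mulrA.
by [].
Qed.
Lemma sp_surj l (al : mexp n) y : y \in R -> exists b, b \in R /\ sp l al b = y.
Proof.
elim: l y => [|i l IH] y hy; first by exists y.
have [b1 [hb1 <-]] := it_surj (al i) i hy.
have [b [hb e]] := IH b1 hb1.
by exists b; split => //=; rewrite e.
Qed.
Lemma sp_mexp0 l r : sp l (mexp0 n) r = r.
Proof. by elim: l => //= i l IH; rewrite ffunE /= IH. Qed.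

Lemma prod_enum (F : 'I_n -> A) : \prod_(i < n) F i = \prod_(i <- enum 'I_n) F i.
Proof. by rewrite enumT /index_enum; case: index_enum_key. Qed.

Lemma mon_r al r : r \in R -> mon al * r = sigma_pow x coef al r * mon al.
Proof. by move=> hr; rewrite /Defs.mon prod_enum sp_prod. Qed.


Lemma enum_split (k : 'I_n) : exists l1 l2, enum 'I_n = l1 ++ k :: l2 /\
  k \notin l1 /\ k \notin l2 /\ (forall t, t \in l2 -> (k < t)%N).
Proof.
have hk : k \in enum 'I_n by rewrite mem_enum.
have u := enum_uniq 'I_n.
have p : pairwise ltn (map val (enum 'I_n)).
  by rewrite -sorted_pairwise ?val_enum_ord ?iota_ltn_sorted //; exact: ltn_trans.
move: u p; case/splitPr: hk => l1 l2 u p.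
exists l1, l2; split => //.
move: u; rewrite cat_uniq /= negb_or => /and3P [_ /andP [k1 _] /andP [k2 _]].
split => //; split => // t ht.
move: p; rewrite map_cat pairwise_cat /= => /and3P [_ _ /andP [/allP h _]].
by apply: h; apply: map_f.
Qed.

Lemma sp_unit l al a : uR a -> uR (sp l al a).
Proof. by move=> h; elim: l => //= i l IH; apply: it_unit. Qed.

Lemma mon_split (k : 'I_n) l1 l2 (v : mexp n) : enum 'I_n = l1 ++ k :: l2 ->
  mon v = (\prod_(i <- l1) x i ^+ v i) * x k ^+ v k * \prod_(i <- l2) x i ^+ v i.
Proof. by move=> e; rewrite /Defs.mon prod_enum e big_cat big_cons /= mulrA. Qed.

Lemma prod_eq (l : seq 'I_n) (v w : mexp n) (k : 'I_n) : k \notin l ->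
  (forall t, t != k -> v t = w t) ->
  \prod_(i <- l) x i ^+ v i = \prod_(i <- l) x i ^+ w i.
Proof.
move=> kl h; apply: eq_big_seq => t tl; rewrite h //.
by apply: contraNneq kl => <-.
Qed.

Lemma addE (v w : mexp n) t : mexp_add v w t = (v t + w t)%N.
Proof. by rewrite ffunE. Qed.
Lemma unitE (k t : 'I_n) : mexp_unit k t = (t == k) :> nat.
Proof. by rewrite ffunE. Qed.

Lemma monK' (k : 'I_n) (v : mexp n) : (forall t : 'I_n, (k < t)%N -> v t = 0%N) ->
  mon v * x k = mon (mexp_add v (mexp_unit k)).
Proof.
move=> hv; have [l1 [l2 [e [k1 [k2 h2]]]]] := enum_split k.
rewrite !(mon_split _ e) addE unitE eqxx addn1.
have -> : \prod_(i <- l2) x i ^+ mexp_add v (mexp_unit k) i = 1.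
  by rewrite big1_seq // => t /andP [_ /h2 lt]; rewrite addE unitE hv //; case: eqP => // et; move: lt; rewrite et ltnn.
have -> : \prod_(i <- l2) x i ^+ v i = 1.
  by rewrite big1_seq // => t /andP [_ /h2 lt]; rewrite hv.
rewrite !mulr1 exprSr mulrA; congr (_ * _ * _).
by apply: prod_eq k1 _ => t tk; rewrite addE unitE (negbTE tk) addn0.
Qed.

Lemma xx_comm (k t : 'I_n) : (k < t)%N -> exists e, uR e /\ x t * x k = e * (x k * x t).
Proof.
move=> lt.
have [c [cR [[u [uR' [u1 u2]]] [d0 [d [d0R [dR hl]]]]]]] := HB.2 k t lt.
have [c0 [c0R [_ e0]]] := HQ.2 k t.
exists c0; split; last by [].
suff -> : c0 = c by split => //; exists u.
have em : x k * x t = mon (mexp_add (mexp_unit k) (mexp_unit t)).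
  rewrite -{1}(mon_unit k) monK' // => t' lt'; rewrite unitE.
  by case: eqP => // ek; move: (ltn_trans lt lt'); rewrite ek ltnn.
set v := mexp_add _ _ in em.
have hc : coef ((c0 - c) * mon v) v = c0 - c by rewrite coef_mon ?eqxx //; apply: RB.
have : (c0 - c) * mon v = d0 + \sum_(k0 < n) d k0 * x k0 by rewrite -hl -em mulrBl e0.
move/(congr1 (fun a => coef a v)); rewrite hc coefD coefS.
rewrite -[d0]mulr1 -(mon0) coef_mon //.
have -> : (v == mexp0 n) = false.
  by apply/negbTE/eqP => /(congr1 (fun f : mexp n => f k)); rewrite addE !unitE ffunE eqxx.
rewrite big1 ?addr0; first by move/eqP; rewrite subr_eq0 => /eqP.
move=> t0 _; rewrite coef_x //; case: eqP => // /(congr1 (fun f : mexp n => (f k, f t))).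
rewrite /v !addE !unitE eqxx.
have nk : (t == k) = false by apply/negbTE; apply: contraTneq lt => ->; rewrite ltnn.
rewrite eqxx nk /=.
rewrite eq_sym nk; case; case: (k =P t0) => // <- _; rewrite nk. by [].
Qed.


Lemma xpow_comm (k t : 'I_n) p : (k < t)%N ->
  exists e, uR e /\ x t ^+ p * x k = e * (x k * x t ^+ p).
Proof.
move=> lt; elim: p => [|p [ep [uep hp]]].
  by exists 1; split; [exact: uR1 | rewrite !expr0 mul1r mulr1 mul1r].
have [e [ue he]] := xx_comm lt.
exists (it p t e * ep); split; first by apply: uRM => //; apply: it_unit.
rewrite exprSr -mulrA he mulrA xpow_r ?(ue.1) // -mulrA (mulrA (x t ^+ p)) hp.
by rewrite !mulrA.
Qed.

Lemma Cm (k : 'I_n) (l : seq 'I_n) (w : mexp n) : (forall t, t \in l -> (k < t)%N) ->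
  exists d, uR d /\ (\prod_(i <- l) x i ^+ w i) * x k = d * (x k * \prod_(i <- l) x i ^+ w i).
Proof.
elim: l => [|i l IH] hl.
  by exists 1; split; [exact: uR1 | rewrite big_nil mul1r mulr1 mul1r].
have [d [ud hd]] : exists d, uR d /\ (\prod_(i <- l) x i ^+ w i) * x k = d * (x k * \prod_(i <- l) x i ^+ w i).
  by apply: IH => t tl; apply: hl; rewrite inE tl orbT.
have [e [ue he]] := xpow_comm (w i) (hl i (mem_head _ _)).
exists (it (w i) i d * e); split; first by apply: uRM => //; apply: it_unit.
rewrite big_cons -mulrA hd mulrA xpow_r ?(ud.1) // -mulrA (mulrA (x i ^+ w i)) he.
by rewrite !mulrA.
Qed.

Lemma monK (k : 'I_n) (v : mexp n) :
  exists c, uR c /\ mon v * x k = c * mon (mexp_add v (mexp_unit k)).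
Proof.
have [l1 [l2 [e [k1 [k2 h2]]]]] := enum_split k.
have [d [ud hd]] := Cm v h2.
exists (sp l1 v (it (v k) k d)); split; first by apply: sp_unit; apply: it_unit.
rewrite !(mon_split _ e) addE unitE eqxx addn1.
rewrite (prod_eq (v := mexp_add v (mexp_unit k)) (w := v) k1); last by move=> t tk; rewrite addE unitE (negbTE tk) addn0.
rewrite (prod_eq (v := mexp_add v (mexp_unit k)) (w := v) k2); last by move=> t tk; rewrite addE unitE (negbTE tk) addn0.
set P1 := \prod_(i <- l1) _; set P2 := \prod_(i <- l2) _.
rewrite -mulrA hd.
rewrite (_ : P1 * x k ^+ v k * (d * (x k * P2)) = P1 * (x k ^+ v k * d) * (x k * P2)); last by rewrite !mulrA.
rewrite xpow_r ?(ud.1) //.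
rewrite (_ : P1 * (it (v k) k d * x k ^+ v k) * (x k * P2) = (P1 * it (v k) k d) * x k ^+ v k * (x k * P2)); last by rewrite !mulrA.
rewrite /P1 sp_prod ?itR ?(ud.1) // exprSr !mulrA. by rewrite /P2.
Qed.


Definition scal p (k : 'I_n) : mexp n := [ffun t => if t == k then p else 0%N].
Definition restr (l : seq 'I_n) (b : mexp n) : mexp n := [ffun t => if t \in l then b t else 0%N].

Lemma Wpow (k : 'I_n) p (v : mexp n) :
  exists c, uR c /\ mon v * x k ^+ p = c * mon (mexp_add v (scal p k)).
Proof.
elim: p => [|p [c [uc hc]]].
  exists 1; split; first exact: uR1.
  rewrite expr0 mulr1 mul1r; congr (mon _); apply/ffunP => t.
  by rewrite addE ffunE; case: (t == k); rewrite addn0.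
have [c' [uc' hc']] := monK k (mexp_add v (scal p k)).
exists (c * c'); split; first exact: uRM.
rewrite exprSr mulrA hc -mulrA hc' mulrA; congr (_ * mon _).
apply/ffunP => t; rewrite !addE !ffunE; case: (t == k) => /=; lia.
Qed.

Lemma Wlist (l : seq 'I_n) (b : mexp n) : uniq l -> forall v : mexp n,
  exists c, uR c /\ mon v * \prod_(i <- l) x i ^+ b i = c * mon (mexp_add v (restr l b)).
Proof.
elim: l => [|i l IH] ul v.
  exists 1; split; first exact: uR1.
  rewrite big_nil mulr1 mul1r; congr (mon _); apply/ffunP => t.
  by rewrite addE ffunE addn0.
move: ul => /= /andP [il ul].
have [c1 [u1 h1]] := Wpow i (b i) v.
have [c2 [u2 h2]] := IH ul (mexp_add v (scal (b i) i)).
exists (c1 * c2); split; first exact: uRM.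
rewrite big_cons mulrA h1 -mulrA h2 mulrA; congr (_ * mon _).
apply/ffunP => t; rewrite !addE !ffunE inE.
case: (eqVneq t i) => [->|ti] /=; first by rewrite (negbTE il) !addn0.
by rewrite addn0.
Qed.

Lemma mon_mul (al be : mexp n) : uR (c_ab x coef al be) /\
  mon al * mon be = c_ab x coef al be * mon (mexp_add al be).
Proof.
have [c [uc hc]] := Wlist be (enum_uniq 'I_n) al.
have e : mon al * mon be = c * mon (mexp_add al be).
  rewrite [Defs.mon x be]/Defs.mon prod_enum hc; congr (_ * mon _); apply/ffunP => t.
  by rewrite !addE ffunE mem_enum.
have ec : c_ab x coef al be = c by rewrite /c_ab e coef_mon ?eqxx //; case: uc.
by rewrite ec.
Qed.


Definition psi (al be : mexp n) (a : A) := sigma_pow x coef al a * c_ab x coef al be.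

Lemma cabR al be : c_ab x coef al be \in R. Proof. exact: coefR. Qed.
Lemma psiR al be a : a \in R -> psi al be a \in R.
Proof. by move=> h; apply: RM; [rewrite spE; apply: spR | apply: cabR]. Qed.
Lemma psi0 al be : psi al be 0 = 0. Proof. by rewrite /psi spE sp0 mul0r. Qed.
Lemma psiD al be a b : psi al be (a + b) = psi al be a + psi al be b.
Proof. by rewrite /psi spE spD mulrDl. Qed.
Lemma psiM al be r a : r \in R -> a \in R ->
  psi al be (r * a) = sigma_pow x coef al r * psi al be a.
Proof. by move=> hr ha; rewrite /psi !spE spM // mulrA. Qed.
Lemma spowR al r : r \in R -> sigma_pow x coef al r \in R.
Proof. by move=> h; rewrite spE; apply: spR. Qed.

Lemma ST al be a : a \in R -> mon al * (a * mon be) = psi al be a * mon (mexp_add al be).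
Proof.
move=> ha; rewrite mulrA mon_r // -mulrA (mon_mul al be).2 mulrA //.
Qed.

Lemma madd_assoc (a b c : mexp n) : mexp_add a (mexp_add b c) = mexp_add (mexp_add a b) c.
Proof. by apply/ffunP => t; rewrite !addE addnA. Qed.
Lemma madd0 (a : mexp n) : mexp_add (mexp0 n) a = a.
Proof. by apply/ffunP => t; rewrite !addE ffunE. Qed.

Lemma psi_comp ga al be a : a \in R ->
  psi ga (mexp_add al be) (psi al be a) = c_ab x coef ga al * psi (mexp_add ga al) be a.
Proof.
move=> ha.
have e1 : mon ga * (mon al * (a * mon be)) =
   psi ga (mexp_add al be) (psi al be a) * mon (mexp_add ga (mexp_add al be)).
  by rewrite ST // ST //; apply: psiR.
have e2 : mon ga * (mon al * (a * mon be)) =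
   (c_ab x coef ga al * psi (mexp_add ga al) be a) * mon (mexp_add ga (mexp_add al be)).
  by rewrite mulrA (mon_mul ga al).2 -mulrA ST // mulrA madd_assoc.
have := congr1 (fun z => coef z (mexp_add ga (mexp_add al be))) (etrans (esym e1) e2).
rewrite /= !coef_mon ?eqxx //; first by apply: RM; [apply: cabR | apply: psiR].
by apply: psiR; apply: psiR.
Qed.

Lemma psi_id be a : a \in R -> psi (mexp0 n) be a = a.
Proof.
move=> ha; rewrite /psi spE sp_mexp0 /c_ab mon0 coef_mon ?R1 //.
by rewrite madd0 eqxx mulr1.
Qed.

Lemma psi_surj al be y : y \in R -> exists b, b \in R /\ psi al be b = y.
Proof.
move=> hy; have [[_ [u [hu [e1 _]]]] _] := mon_mul al be.
have [b [hb eb]] := sp_surj (enum 'I_n) al (RM hy hu).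
by exists b; split => //; rewrite /psi spE eb -mulrA e1 mulr1.
Qed.


Variables (m : nat) (mo2 : rel (mexp n * 'I_m)).
Local Notation vec := 'cV[A]_m.
Local Notation lmV := (is_lmV coef mo2).
Definition Tp := (A * vec * mexp n * mexp n)%type.
Definition trm (p : Tp) := p.1.1.1.
Definition tg (p : Tp) := p.1.1.2.
Definition tal (p : Tp) := p.1.2.
Definition tmu (p : Tp) := p.2.
Definition term (i : 'I_m) (p : Tp) :=
  trm p * sigma_pow x coef (tal p) (coef (tg p i 0) (tmu p)) * c_ab x coef (tal p) (tmu p).
Definition Tok (F : seq vec) mu i (p : Tp) := [/\ trm p \in R, tg p \in F, lmV (tg p) (tmu p, i) &
   mexp_add (tal p) (tmu p) = mu].
Definition Tset (F : seq vec) (mu : mexp n) (i : 'I_m) (a : A) : Prop :=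
  exists s : seq Tp, (forall p, p \in s -> Tok F mu i p) /\ a = \sum_(p <- s) term i p.

Lemma termE i p : term i p = trm p * psi (tal p) (tmu p) (coef (tg p i 0) (tmu p)).
Proof. by rewrite /term /psi mulrA. Qed.

Lemma T0 F mu i : Tset F mu i 0.
Proof. by exists [::]; split => //; rewrite big_nil. Qed.

Lemma TD F mu i a b : Tset F mu i a -> Tset F mu i b -> Tset F mu i (a + b).
Proof.
move=> [s1 [h1 ->]] [s2 [h2 ->]]; exists (s1 ++ s2); split; last by rewrite big_cat.
by move=> p; rewrite mem_cat => /orP [/h1|/h2].
Qed.

Lemma TM F mu i r a : r \in R -> Tset F mu i a -> Tset F mu i (r * a).
Proof.
move=> hr [s [h ->]]; exists [seq (r * trm p, tg p, tal p, tmu p) | p <- s]; split.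
  move=> p /mapP [q /h [q1 q2 q3 q4] ->]; split => //; exact: RM.
by rewrite big_map mulr_sumr; apply: eq_bigr => p _; rewrite /term /= !mulrA.
Qed.

Lemma Tmono F F' mu i a : {subset F <= F'} -> Tset F mu i a -> Tset F' mu i a.
Proof.
move=> sub [s [h e]]; exists s; split => // p /h [q1 q2 q3 q4]; split => //; exact: sub.
Qed.

Lemma psi_sum al be (s : seq Tp) (G : Tp -> A) :
  psi al be (\sum_(p <- s) G p) = \sum_(p <- s) psi al be (G p).
Proof.
elim: s => [|p s IH]; first by rewrite !big_nil psi0.
by rewrite !big_cons psiD IH.
Qed.

Lemma Tshift F mu i a ga : Tset F mu i a -> Tset F (mexp_add ga mu) i (psi ga mu a).
Proof.
move=> [s [h ->]].
exists [seq (sigma_pow x coef ga (trm p) * c_ab x coef ga (tal p), tg p, mexp_add ga (tal p), tmu p) | p <- s].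
split.
  move=> p /mapP [q /h [q1 q2 q3 q4] ->]; split => //.
  - by apply: RM; [apply: spowR | apply: cabR].
  - by rewrite /tal /tmu /= -madd_assoc q4.
rewrite psi_sum big_map; apply: eq_big_seq => p /h [q1 q2 q3 q4].
rewrite termE psiM ?coefR ?psiR //.
rewrite (termE i (_, _, _, _)) /trm /tg /tal /tmu /= -q4 psi_comp ?coefR //.
by rewrite !mulrA. exact: coefR.
Qed.

Lemma Tself F g be i : g \in F -> lmV g (be, i) -> Tset F be i (coef (g i 0) be).
Proof.
move=> gF hg; exists [:: (1, g, mexp0 n, be)]; split.
  by move=> p; rewrite inE => /eqP ->; split => //; [exact: R1 | rewrite /tal /tmu /= madd0].
by rewrite big_seq1 termE /trm /tg /tal /tmu /= psi_id ?coefR // mul1r.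
Qed.


Hypothesis Hto : is_total_order mo2.

Lemma lm_uniq (f : vec) X Y : lmV f X -> lmV f Y -> X = Y.
Proof.
move=> [h1 h2] [h3 h4]; case: Hto => _ [anti _]; apply: anti.
by rewrite h2 // h4.
Qed.

Lemma sum_enum t (F : 'I_t -> A) : \sum_(k < t) F k = \sum_(k <- enum 'I_t) F k.
Proof. by rewrite enumT /index_enum; case: index_enum_key. Qed.

Lemma red_T F (f : vec) mu i : lmV f (mu, i) -> reducible R x coef mo2 F f ->
  Tset F mu i (coef (f i 0) mu).
Proof.
move=> hl [mu' [i' [hl' [t [g [r [al [mu'' [hg [hr [hlg [hadd he]]]]]]]]]]]].
case: (lm_uniq hl' hl) => e1 e2; subst mu' i'.
exists [seq (r k, g k, al k, mu'' k) | k <- enum 'I_t]; split.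
  by move=> p /mapP [k _ ->]; split; [apply: hr | apply: hg | apply: hlg | apply: hadd].
by rewrite he big_map sum_enum.
Qed.

Lemma T_red F (f : vec) mu i : lmV f (mu, i) -> Tset F mu i (coef (f i 0) mu) ->
  reducible R x coef mo2 F f.
Proof.
move=> hl [s [h e]]; exists mu, i; split => //.
pose p0 : Tp := (0, 0, mexp0 n, mexp0 n).
exists (size s), (fun k => tg (nth p0 s k)), (fun k => trm (nth p0 s k)),
  (fun k => tal (nth p0 s k)), (fun k => tmu (nth p0 s k)).
have hk : forall k : 'I_(size s), Tok F mu i (nth p0 s k).
  by move=> k; apply: h; apply: mem_nth.
split; first by move=> k; case: (hk k).
split; first by move=> k; case: (hk k).
split; first by move=> k; case: (hk k).
split; first by move=> k; case: (hk k).
by rewrite e (big_nth p0) big_mkord.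
Qed.

Lemma supp_list (f : vec) (l : seq 'I_m) : exists L : seq (mexp n * 'I_m),
  forall i nu, i \in l -> coef (f i 0) nu != 0 -> (nu, i) \in L.
Proof.
elim: l => [|i l [L hL]]; first by exists [::].
have [s [_ [hs _]]] := coef_ex (f i 0).
exists ([seq (nu, i) | nu <- s] ++ L) => j nu; rewrite inE mem_cat => /orP [/eqP ->|jl] hc.
  apply/orP; left; apply: map_f; apply: contraR hc => /hs ->; by rewrite eqxx.
by rewrite hL ?orbT.
Qed.

Lemma max_ex (L : seq (mexp n * 'I_m)) : L != [::] ->
  exists X, X \in L /\ forall Y, Y \in L -> mo2 X Y.
Proof.
case: Hto => refl [_ [trans tot]].
elim: L => [//|Y0 L IH] _.
case: (eqVneq L [::]) => [->|nz].
  by exists Y0; split; [rewrite inE | move=> Y; rewrite inE => /eqP ->].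
have [X [XL hX]] := IH nz.
case/orP: (tot Y0 X) => h.
  exists Y0; split; first exact: mem_head.
  move=> Y; rewrite inE => /orP [/eqP -> //|/hX]; exact: trans.
exists X; split; first by rewrite inE XL orbT.
by move=> Y; rewrite inE => /orP [/eqP ->|/hX].
Qed.

Lemma lm_ex (f : vec) : f != 0 -> exists X, lmV f X.
Proof.
move=> nz.
have [i hi] : exists i, f i 0 != 0.
  apply/existsP; apply: contraR nz; rewrite negb_exists => /forallP h.
  by apply/eqP/matrixP => i j; rewrite ord1 mxE; apply/eqP; move: (h i); rewrite negbK.
have [nu hnu] : exists nu, coef (f i 0) nu != 0.
  have [s [_ [hs es]]] := coef_ex (f i 0).
  case: (boolP (has (fun nu => coef (f i 0) nu != 0) s)) => [/hasP [nu _ h]|]; first by exists nu.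
  move=> /hasPn h; move: hi; rewrite es big_seq big1 ?eqxx // => nu /h.
  by rewrite negbK => /eqP ->; rewrite mul0r.
have [L hL] := supp_list f (enum 'I_m).
set L' := [seq Y <- L | coef (f Y.2 0) Y.1 != 0].
have L'nz : L' != [::].
  apply/eqP => e; have : (nu, i) \in L' by rewrite mem_filter /= hnu hL ?mem_enum.
  by rewrite e.
have [X [XL hX]] := max_ex L'nz.
exists X; split; first by move: XL; rewrite mem_filter => /andP [].
move=> Y hY; apply: hX; rewrite mem_filter hY /=.
by case: Y hY => nu' j hY; apply: hL; rewrite ?mem_enum.
Qed.


Lemma main (HN : left_noetherian R) (M : vec -> Prop) : is_submodule M ->
  exists G, groebner_basis R x coef mo2 M G.
Proof.
move=> [HM0 [HMD HMZ]].
case: (classic (exists v, M v /\ v != 0)) => [Hnz|Hz]; last first.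
  exists [:: 0]; left; split => // v hv.
  by case: (eqVneq v 0) => // nz; exfalso; apply: Hz; exists v.
pose good (G : seq vec) := forall g, g \in G -> M g /\ g != 0.
case: (classic (exists G, good G /\ forall f, M f -> f != 0 -> reducible R x coef mo2 G f)) =>
  [[G [hG hred]]|Hbad].
  exists G; right; split => //; split => //.
  apply/eqP => eG; move: Hnz => [v [hv nz]].
  have [[mu i] hl] := lm_ex nz.
  have [s [hs es]] := red_T hl (hred v hv nz); move: hl => [hl _].
  case: s hs es => [_|p s hs _]; first by rewrite big_nil => e; move: hl; rewrite e eqxx.
  by case: (hs p (mem_head _ _)); rewrite eG.
have Hb : forall G, exists f, good G -> M f /\ f != 0 /\ ~ reducible R x coef mo2 G f.
  move=> G; case: (classic (good G)) => hG; last by exists 0.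
  apply: NNPP => hn; apply: Hbad; exists G; split => // f hf nz.
  by apply: NNPP => hr; apply: hn; exists f.
pose pick G := proj1_sig (constructive_indefinite_description _ (Hb G)).
have hpick G : good G -> M (pick G) /\ pick G != 0 /\ ~ reducible R x coef mo2 G (pick G).
  by rewrite /pick; case: constructive_indefinite_description.
pose Fs k := iter k (fun G => rcons G (pick G)) [::].
have FsS k : Fs k.+1 = rcons (Fs k) (pick (Fs k)) by [].
have Fgood k : good (Fs k).
  elim: k => [//|k IH] g; rewrite FsS mem_rcons inE => /orP [/eqP ->|]; last exact: IH.
  by have [h1 [h2 _]] := hpick _ IH.
have Fmono k k' : (k <= k')%N -> {subset Fs k <= Fs k'}.
  move=> /subnKC <-; elim: (k' - k)%N => [|d IH]; first by rewrite addn0.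
  by move=> g /IH h; rewrite addnS FsS mem_rcons inE h orbT.
pose f k := pick (Fs k).
have fin k : f k \in Fs k.+1 by rewrite FsS mem_rcons mem_head.
have fbad k : M (f k) /\ f k != 0 /\ ~ reducible R x coef mo2 (Fs k) (f k) := hpick _ (Fgood k).
have hX k : exists X, lmV (f k) X by apply: lm_ex; case: (fbad k) => _ [].
pose X k := proj1_sig (constructive_indefinite_description _ (hX k)).
have Xlm k : lmV (f k) (X k) by rewrite /X; case: constructive_indefinite_description.
have badT k : ~ Tset (Fs k) (X k).1 (X k).2 (coef (f k (X k).2 0) (X k).1).
  move=> hT; case: (fbad k) => _ [_]; apply; apply: (T_red (mu := (X k).1) (i := (X k).2)) => //.
  by case: (X k) (Xlm k).
have [phi [hphi hdk]] := dickson X.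
pose i0 := (X (phi 0%N)).2; pose mu0 := (X (phi 0%N)).1.
have hi j : (X (phi j)).2 = i0 by rewrite /i0; case: (hdk 0%N j (leq0n _)).
pose dl j : mexp n := [ffun t => ((X (phi j)).1 t - mu0 t)%N].
have hdl j : mexp_add (dl j) mu0 = (X (phi j)).1.
  apply/ffunP => t; rewrite addE ffunE subnK //.
  by case: (hdk 0%N j (leq0n _)) => _ h; apply: h.
pose ep j : mexp n := [ffun t => ((X (phi j.+1)).1 t - (X (phi j)).1 t)%N].
have hep j : mexp_add (ep j) (dl j) = dl j.+1.
  apply/ffunP => t; rewrite !addE !ffunE.
  case: (hdk 0%N j (leq0n _)) => _ h1; case: (hdk j j.+1 (leqnSn _)) => _ h2.
  have := h1 t; have := h2 t; rewrite /mu0; lia.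
have step j F b : b \in R -> Tset F (mexp_add (dl j) mu0) i0 (psi (dl j) mu0 b) ->
    Tset F (mexp_add (dl j.+1) mu0) i0 (psi (dl j.+1) mu0 b).
  move=> hb hT; have := Tshift (ep j) hT.
  rewrite psi_comp // madd_assoc hep.
  have [[_ [u [hu [e1 _]]]] _] := mon_mul (ep j) (dl j).
  by move=> h; have := TM hu h; rewrite mulrA e1 mul1r.
pose Q j a := a \in R /\ Tset (Fs (phi j).+1) (mexp_add (dl j) mu0) i0 (psi (dl j) mu0 a).
have QI j : left_ideal R (Q j).
  split; first by move=> a [].
  split; first by split; [exact: R0 | rewrite psi0; exact: T0].
  split; first by move=> a b [ha ta] [hb tb]; split; [exact: RD | rewrite psiD; exact: TD].
  move=> r a hr [ha ta]; split; first exact: RM.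
  by rewrite psiM //; apply: TM => //; apply: spowR.
have QS j a : Q j a -> Q j.+1 a.
  move=> [ha ta]; split => //; apply: Tmono (step _ _ _ ha ta).
  by apply: Fmono; apply: ltnW; rewrite ltnS; apply: hphi.
have [J hJ] := acc HN QI QS.
set k := phi J.+1.
have hXk : X k = (mexp_add (dl J.+1) mu0, i0) by rewrite hdl -(hi J.+1); case: (X k).
have [b [hb eb]] := psi_surj (dl J.+1) mu0 (coefR (f k i0 0) (X k).1).
have qb : Q J.+1 b.
  split => //; rewrite eb.
  rewrite hXk /=; apply: Tself; first exact: fin.
  by rewrite -hXk; apply: Xlm.
have [_ tJ] := hJ b qb.
exfalso; apply: (badT k); have e2 : (X k).2 = i0 by rewrite hXk.
rewrite e2 -eb hXk /=.
apply: Tmono (step _ _ _ hb tJ).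
by apply: Fmono; apply: hphi.
Qed.

End Alg.

Theorem corollary32 (A : nzRingType) (R : {pred A}) (n : nat) (x : 'I_n -> A)
  (coef : A -> mexp n -> A) (m : nat) (mo : rel (mexp n))
  (mo2 : rel (mexp n * 'I_m)) :
  sigma_PBW R x coef ->
  quasi_commutative R x ->
  bijective_ext R x coef ->
  left_noetherian R ->
  monomial_order x coef mo ->
  module_monomial_order x coef mo mo2 ->
  forall M : 'cV[A]_m -> Prop, is_submodule M ->
  exists G : seq 'cV[A]_m, groebner_basis R x coef mo2 M G.
Proof.
move=> HP HQ HB HN _ [Hto _] M HM.
exact: (main HP HQ HB Hto HN HM).
Qed.
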